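(* Let $X$ be a real random variable with law $\mu$ describing the agents' types, with $\mu$ satisfying the standing assumptions below and $\int|x|\,d\mu<+\infty$. If $\vec v_\mu$ is the optimal percentile vector associated with $X$, then $\vec v_\mu$ is also the optimal percentile vector for every random variable of the form $X'=\sigma X+m$ with $m\in\mathbb{R}$ and $\sigma>0$.
   Context: For $\vec x\in\mathbb{R}^n$, $\vec y\in\mathbb{R}^k$: $SC(\vec x,\vec y)=\frac1n\sum_i\min_j|x_i-y_j|$, $SC_{opt}(\vec x)=\min_{\vec y}SC(\vec x,\vec y)$. A percentile vector is $\vec v$ with $0\le v_1\le\dots\le v_k\le1$; $\mathcal{PM}_{\vec v}$ sorts the reports $x_{(1)}\le\dots\le x_{(n)}$ and places facility $j$ at $x_{(\lfloor(n-1)v_j\rfloor+1)}$. For a law $\eta$ and $\vec X_n$ i.i.d. of law $\eta$, $B^{(n)}_{ar}(f)=\mathbb{E}[SC_f(\vec X_n)]/\mathbb{E}[SC_{opt}(\vec X_n)]$. The optimal percentile vector associated with a random variable of law $\eta$ is $(F_\eta(y_1),\dots,F_\eta(y_k))$, where $y_1\le\dots\le y_k$ are the support points of a solution of $\min_{\lambda\in\mathcal{P}_k(\mathbb{R})}W_1(\eta,\lambda)$ ($\mathcal{P}_k(\mathbb{R})$: probability measures $\sum_{j=1}^k\nu_j\delta_{x_j}$; $W_1$: 1-Wasserstein distance; $F_\eta$: c.d.f.); it satisfies $\lim_n B^{(n)}_{ar}(\mathcal{PM}_{\vec v})=1$. Standing assumptions on $\mu$: absolutely continuous with density $\rho_\mu$;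 support an interval on whose interior $\rho_\mu>0$; $\rho_\mu$ differentiable on the support. *)

(* Defs.v *)
From HB Require Import structures.
From mathcomp Require Import all_boot all_order all_algebra.
From mathcomp Require Import all_classical all_reals all_analysis.
Set Implicit Arguments. Unset Strict Implicit. Unset Printing Implicit Defensive.
Import Order.TTheory GRing.Theory Num.Theory.
Import numFieldNormedType.Exports.
Local Open Scope classical_set_scope.
Local Open Scope ring_scope.

Definition cdfR (R : realType) (eta : set R -> \bar R) (y : R) : R :=
  fine (eta [set` `]-oo, y]]).

Definition discrete_meas (R : realType) (k : nat) (x nu : 'I_k -> R)
  : set R -> \bar R :=
  fun A => (\sum_(j < k) (nu j)%:E * \d_(x j) A)%E.

(* nu is a family of probability weights, so that discrete_meas x nu is in P_k(R) *)
Definition prob_weights (R : realType) (k : nat) (nu : 'I_k -> R) : Prop :=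
  (forall j, 0 <= nu j) /\ \sum_(j < k) nu j = 1.

Definition is_coupling (R : realType) (eta lam : set R -> \bar R)
  (pi : probability (R * R)%type R) : Prop :=
  forall A : set R, measurable A ->
    pi (A `*` setT) = eta A /\ pi (setT `*` A) = lam A.

Definition W1 (R : realType) (eta lam : set R -> \bar R) : \bar R :=
  ereal_inf [set (\int[pi]_z (`|z.1 - z.2|)%:E)%E
            | pi in [set pi : probability (R * R)%type R | is_coupling eta lam pi]].

Definition optimal_percentile_vector (R : realType) (k : nat)
  (eta : set R -> \bar R) (v : 'I_k -> R) : Prop :=
  exists (y nu : 'I_k -> R),
    [/\ (forall i j : 'I_k, (i <= j)%N -> y i <= y j),
        prob_weights nu /\ (forall j, 0 < nu j),
        (forall x' nu' : 'I_k -> R, prob_weights nu' ->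
            (W1 eta (discrete_meas y nu) <= W1 eta (discrete_meas x' nu'))%E)
      & forall j, v j = cdfR eta (y j)].

Definition standing_assumptions (R : realType) (mu : set R -> \bar R) : Prop :=
  exists rho : R -> R,
    [/\ measurable_fun setT rho,
        (forall x, 0 <= rho x),
        (forall A, measurable A ->
           mu A = (\int[@lebesgue_measure R]_(x in A) (rho x)%:E)%E)
      & exists I : set R,
          [/\ is_interval I,
              (forall x, ~ I x -> rho x = 0),
              (forall x, interior I x -> 0 < rho x)
            & (forall x, interior I x -> derivable rho x 1)]].
Arguments optimal_percentile_vector {R} k eta v.

(* Main.v *)
Require Import Defs.
From HB Require Import structures.
From mathcomp Require Import all_boot all_order all_algebra.
From mathcomp Require Import all_classical all_reals all_analysis.
From mathcomp Require Import measurable_realfun.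
Import Order.TTheory GRing.Theory Num.Theory.
Import numFieldNormedType.Exports.
Local Open Scope classical_set_scope.
Local Open Scope ring_scope.

Section Aff.
Variable R : realType.

Definition aff (a b : R) (x : R) : R := a * x + b.
Definition aff2 (a b : R) (z : R * R) : R * R := (aff a b z.1, aff a b z.2).

Lemma aff_meas a b : measurable_fun setT (aff a b).
Proof.
apply: measurable_funD; last exact: measurable_cst.
apply: measurable_funM; [exact: measurable_cst | exact: measurable_id].
Qed.

Lemma aff2_meas a b : measurable_fun setT (aff2 a b).
Proof.
apply: measurable_fun_pair.
- exact: measurableT_comp (aff_meas a b) measurable_fst.
- exact: measurableT_comp (aff_meas a b) measurable_snd.
Qed.

HB.instance Definition _ a b :=
  isMeasurableFun.Build _ _ _ _ (aff2 a b) (aff2_meas a b).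

Lemma aff_pre_meas a b A : measurable A -> measurable (aff a b @^-1` A).
Proof. by move=> mA; rewrite -[X in measurable X]setTI; apply: aff_meas. Qed.

Lemma W1_ge0 (eta lam : set R -> \bar R) : (0 <= W1 eta lam)%E.
Proof.
apply: le_ereal_inf_tmp => _ [pi _ <-].
by apply: integral_ge0 => z _; rewrite lee_fin.
Qed.

Lemma W1_aff (a b : R) (eta lam eta' lam' : set R -> \bar R) : 0 < a ->
  (forall A, measurable A -> eta' A = eta (aff a b @^-1` A)) ->
  (forall A, measurable A -> lam' A = lam (aff a b @^-1` A)) ->
  (W1 eta' lam' <= a%:E * W1 eta lam)%E.
Proof.
move=> a0 heta hlam.
have mg : measurable_fun setT (fun z : R * R => (`|z.1 - z.2|)%:E).
  apply/measurable_EFinP; apply: measurableT_comp; first exact: normr_measurable.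
  exact: measurable_funB measurable_fst measurable_snd.
have key : forall pi : probability (R * R)%type R, is_coupling eta lam pi ->
    (W1 eta' lam' <= a%:E * \int[pi]_z (`|z.1 - z.2|)%:E)%E.
  move=> pi cpl.
  pose pi' := distribution pi (aff2 a b).
  apply: ereal_inf_lbound; exists pi'.
    move=> A mA; split.
    - change (pi (aff2 a b @^-1` (A `*` setT)) = eta' A).
      have -> : aff2 a b @^-1` (A `*` setT) = (aff a b @^-1` A) `*` setT.
        by apply/seteqP; split => z /=; rewrite /aff2 /= => -[].
      by rewrite heta // (cpl _ (aff_pre_meas a b _ mA)).1.
    - change (pi (aff2 a b @^-1` (setT `*` A)) = lam' A).
      have -> : aff2 a b @^-1` (setT `*` A) = setT `*` (aff a b @^-1` A).
        by apply/seteqP; split => z /=; rewrite /aff2 /= => -[].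
      by rewrite hlam // (cpl _ (aff_pre_meas a b _ mA)).2.
  rewrite /pi' /distribution ge0_integral_pushforward //.
  rewrite preimage_setT -ge0_integralZl_EFin //; last exact: ltW.
  apply: eq_integral => z _ /=; rewrite /aff2 /aff /=.
  rewrite -EFinM; congr (_%:E).
  by rewrite opprD addrACA subrr addr0 -mulrBr normrM gtr0_norm.
have h1 : (a^-1%:E * W1 eta' lam' <= W1 eta lam)%E.
  apply: le_ereal_inf_tmp => _ [pi cpl <-].
  have := key pi cpl => hk.
  have -> : (\int[pi]_z (`|z.1 - z.2|)%:E)%E =
      (a^-1%:E * (a%:E * \int[pi]_z (`|z.1 - z.2|)%:E))%E.
    by rewrite muleA -EFinM mulVf ?gt_eqF // mul1e.
  apply: lee_pmul => //; first by rewrite lee_fin invr_ge0 ltW.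
  by apply: W1_ge0.
have -> : W1 eta' lam' = (a%:E * (a^-1%:E * W1 eta' lam'))%E.
  by rewrite muleA -EFinM mulfV ?gt_eqF // mul1e.
apply: lee_pmul => //; first by rewrite lee_fin ltW.
by apply: mule_ge0; [rewrite lee_fin invr_ge0 ltW | apply: W1_ge0].
Qed.
Lemma affK (a b : R) : a != 0 -> cancel (aff a b) (aff a^-1 (- (b / a))).
Proof.
by move=> a0 x; rewrite /aff mulrDr mulrA mulVf // mul1r mulrC addrK.
Qed.

Lemma affKV (a b : R) : a != 0 -> cancel (aff a^-1 (- (b / a))) (aff a b).
Proof.
move=> a0 x; rewrite /aff mulrDr mulrA mulfV // mul1r mulrN.
by rewrite mulrC mulfVK // addrNK.
Qed.

Lemma disc_aff a b k (x nu : 'I_k -> R) A :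
  discrete_meas (fun j => aff a b (x j)) nu A = discrete_meas x nu (aff a b @^-1` A).
Proof.
by apply: eq_bigr => j _; rewrite !diracE.
Qed.

End Aff.
Arguments aff {R}.
Arguments affK {R}.
Arguments affKV {R}.
Arguments disc_aff {R}.
Arguments W1_aff {R}.
Arguments W1_ge0 {R}.

Theorem theorem8 (R : realType) (d : measure_display) (Omega : measurableType d)
  (P : probability Omega R) (X : {RV P >-> R}) :
  standing_assumptions (distribution P X) ->
  (\int[distribution P X]_x (`|x|)%:E < +oo)%E ->
  forall (k : nat) (v : 'I_k -> R),
    optimal_percentile_vector k (distribution P X) v ->
    forall (sigma m : R), 0 < sigma ->
    forall X' : {RV P >-> R}, (forall w, X' w = sigma * X w + m) ->
      optimal_percentile_vector k (distribution P X') v.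
Proof.
move=> _ _ k v [y [nu [ymono [hnu hnupos] yopt hv]]] s m s0 X' hX'.
have s0' : s != 0 by rewrite gt_eqF.
have hmu' : forall A, distribution P X' A = distribution P X (aff s m @^-1` A).
  move=> A; rewrite /distribution /pushforward; congr (P _).
  by apply/funext => w /=; rewrite hX'.
have hmu : forall A, distribution P X A =
    distribution P X' (aff s^-1 (- (m / s)) @^-1` A).
  move=> A; rewrite hmu'; congr (distribution P X _).
  by apply/funext => x /=; rewrite affK.
exists (fun j => aff s m (y j)), nu; split.
- by move=> i j ij; rewrite /aff lerD2r ler_pM2l // ymono.
- by [].
- move=> x' nu' hnu'.
  pose z := fun j => aff s^-1 (- (m / s)) (x' j).
  apply: (le_trans (@W1_aff R s m (distribution P X) (discrete_meas y nu) _ _ s0 _ _)).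
    by move=> A _; rewrite hmu'.
    by move=> A _; rewrite disc_aff.
  apply: (le_trans (y := (s%:E * W1 (distribution P X) (discrete_meas z nu'))%E)).
    apply: lee_pmul => //; first by rewrite lee_fin ltW.
      exact: W1_ge0.
    exact: yopt.
  have h2 := @W1_aff R s^-1 (- (m / s))
    (distribution P X') (discrete_meas x' nu')
    (distribution P X) (discrete_meas z nu').
  rewrite invr_gt0 in h2; have {h2} := h2 s0 (fun A _ => hmu A).
  move=> /(_ (fun A _ => disc_aff _ _ _ _ _ _)) h2.
  apply: (le_trans (y := (s%:E * (s^-1%:E * W1 (distribution P X') (discrete_meas x' nu')))%E)).
    apply: lee_pmul => //; first by rewrite lee_fin ltW.
      exact: W1_ge0.
  by rewrite muleA -EFinM mulfV // mul1e.
- move=> j; rewrite hv /cdfR hmu'; congr (fine (distribution P X _)).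
  apply/funext => x /=; rewrite !in_itv /= /aff lerD2r ler_pM2l //.
Qed.
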